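(* Let $X$ be a continuum and $T\subset X$ a thick subcontinuum. Then every null-aposyndetic point of $X$ lies in the boundary $\overline T\cap\overline{X-T}$ of $T$.
   Context: A continuum is a nondegenerate compact connected Hausdorff space. A subcontinuum $T\subset X$ is thick if $T\neq X$ and $T$ has nonempty interior. A point $x\in X$ is null-aposyndetic if no proper subcontinuum of $X$ contains $x$ in its interior. *)

(* Defs.v *)
From mathcomp Require Import all_boot all_order.
From mathcomp Require Import all_classical.
From mathcomp Require Import topology.
Set Implicit Arguments. Unset Strict Implicit. Unset Printing Implicit Defensive.
Local Open Scope classical_set_scope.

Definition nondegenerate {T : Type} (A : set T) : Prop :=
  exists x y, A x /\ A y /\ x <> y.

Definition is_continuum (X : topologicalType) : Prop :=
  [/\ nondegenerate (@setT X), compact (@setT X),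
      connected (@setT X) & hausdorff_space X].

(* A subcontinuum of X: a subset which is a continuum in the subspace
   topology (Hausdorffness is inherited from X). *)
Definition subcontinuum (X : topologicalType) (A : set X) : Prop :=
  [/\ nondegenerate A, compact A & connected A].

Definition thick (X : topologicalType) (T : set X) : Prop :=
  [/\ subcontinuum T, T <> setT & (interior T) !=set0].

Definition null_aposyndetic (X : topologicalType) (x : X) : Prop :=
  forall A : set X, subcontinuum A -> A <> setT -> ~ (interior A) x.

(* Main.v *)
Require Import Defs.
From mathcomp Require Import all_boot all_order all_classical topology.
Local Open Scope classical_set_scope.

Lemma clopen_helper (X : topologicalType) (A B : set X) :
  connected [set: X] -> closed A -> closed B -> A `|` B = setT ->
  A `&` B = set0 -> A !=set0 -> B = set0.
Proof.
move=> cX cA cB AB0 AB An.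
have AT : A = setT.
  have := cX A An; apply.
  - exists (~` B); first exact: closed_openC.
    rewrite setTI; apply/seteqP; split => p.
      by move=> Ap Bp; have : (A `&` B) p by []; rewrite AB.
    move=> nBp; have : (A `|` B) p by rewrite AB0.
    by case.
  - by exists A; rewrite ?setTI.
apply/seteqP; split => p // Bp.
have : (A `&` B) p by split => //; rewrite AT.
by rewrite AB.
Qed.

Lemma sep_closed (X : topologicalType) (A E0 E1 : set X) :
  closed A -> A = E0 `|` E1 -> separated E0 E1 -> closed E0.
Proof.
move=> cA AE [s1 _].
have sub : closure E0 `<=` E0.
  move=> p cp.
  have : A p.
    rewrite (closure_id A).1 //; apply: closureS cp; rewrite AE; by move=> q; left.
  rewrite AE => -[//|E1p].
  by have : (closure E0 `&` E1) p by []; rewrite s1.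
apply/closure_id; apply/seteqP; split => //; exact: subset_closure.
Qed.

Lemma conn_union (X : topologicalType) (T M Z2 : set X) :
  connected [set: X] -> closed M -> connected T -> T !=set0 -> T `<=` M ->
  closed Z2 -> M `|` Z2 = setT -> (forall p, M p -> ~ T p -> ~ Z2 p) ->
  connected M.
Proof.
move=> cX cM cT Tn TM cZ2 MZ2 H.
apply/connectedP => E [En ME sep].
have c0 : closed (E false) by exact: (sep_closed _ _ _ _ cM ME sep).
have c1 : closed (E true).
  have sep' : separated (E true) (E false) by rewrite separatedC.
  by apply: (sep_closed _ _ _ _ cM _ sep'); rewrite setUC.
have key : forall P R : set X, closed P -> closed R -> M = P `|` R ->
    P `&` R = set0 -> T `<=` P -> R !=set0 -> False.
  move=> P R cP cR MPR PR TP [r Rr].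
  have R0 : R = set0.
    apply: (@clopen_helper X (P `|` Z2) R cX (closedU cP cZ2) cR).
    - apply/seteqP; split => // p _.
      have : (M `|` Z2) p by rewrite MZ2.
      case=> [|Z2p]; last by left; right.
      by rewrite MPR => -[Pp|Rp]; [left; left|right].
    - apply/seteqP; split => // p [[Pp|Z2p] Rp].
        have PRp : (P `&` R) p by [].
        by rewrite PR in PRp.
      have Mp : M p by rewrite MPR; right.
      apply: (H p Mp) => // Tp.
      have PRp : (P `&` R) p by split => //; apply: TP.
      by rewrite PR in PRp.
    - by case: Tn => t Tt; exists t; left; apply: TP.
  by move: Rr; rewrite R0.
have dj := separated_disjoint sep.
have TE : T `<=` E false `|` E true by rewrite -ME.
case: (connected_subset sep TE cT) => TP.
  by apply: (key (E false) (E true)).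
apply: (key (E true) (E false)) => //; first by rewrite setUC.
by rewrite setIC.
Qed.

Theorem mainTheorem17 (X : topologicalType) (T : set X) (x : X) :
  is_continuum X -> thick T -> null_aposyndetic x ->
  (closure T `&` closure (~` T)) x.
Proof.
move=> [_ cptX cX hX] [[Tnd cptT cT] TneX [y Ty]] nx.
have hT : closed T := compact_closed hX cptT.
have Tn : T !=set0 by case: Tnd => a [b [Ta _]]; exists a.
have intC : T° `<=` ~` closure (~` T).
  by rewrite -interiorC setCK.
split; last first.
  apply: contrapT => ncl; apply: (nx T) => //.
  have : (~` closure (~` T)) x by [].
  by rewrite -interiorC setCK.
apply: contrapT => ncl.
have nTx : ~ T x by move=> Tx; apply: ncl; exact: subset_closure.
set Z := closure (~` T).
have cZ : closed Z := @closed_closure _ _.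
have ZT : ~` T `<=` Z := @subset_closure _ _.
have oT : open (~` T) := closed_openC hT.
have Zx : Z x by apply: ZT.
have nZy : ~ Z y by move=> Zy; exact: (intC _ Ty).
have cptZ : forall A : set X, closed A -> compact A.
  by move=> A cA; exact: (subclosed_compact cA cptX).
have ZTT : forall p, Z p \/ T p.
  by move=> p; case: (pselect (T p)) => Tp; [right|left; apply: ZT].
case: (pselect (connected Z)) => cZc.
  have [t [Zt Tt]] : Z `&` T !=set0.
    apply: contrapT => /nonemptyPn ZT0.
    have T0 : T = set0.
      apply: (@clopen_helper X Z T cX cZ hT) => //.
      apply/seteqP; split => // p _; by case: (ZTT p) => ?; [left|right].
      by exists x.
    by case: Tn => q; rewrite T0.
  apply: (nx Z) => //.
  - split => //; last exact: cptZ.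
    by exists x, t; split => //; split => // xt; apply: nTx; rewrite xt.
  - by move=> ZT'; apply: nZy; rewrite ZT'.
  - apply: (@filterS _ _ _ (~` T)) => //; apply: open_nbhs_nbhs; split => //.
have Zsplit : forall Z1 Z2 : set X, closed Z1 -> closed Z2 -> Z = Z1 `|` Z2 ->
    Z1 `&` Z2 = set0 -> Z2 !=set0 -> Z1 x -> False.
  move=> Z1 Z2 cZ1 cZ2 ZZ Z12 [z Z2z] Z1x.
  have nZ12 : forall p, Z1 p -> Z2 p -> False.
    by move=> p a b; have : (Z1 `&` Z2) p by []; rewrite Z12.
  have MZ2 : (T `|` Z1) `|` Z2 = setT.
    apply/seteqP; split => // p _.
    case: (pselect (T p)) => Tp; first by left; left.
    have : Z p by apply: ZT.
    by rewrite ZZ => -[a|b]; [left; right|right].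
  apply: (nx (T `|` Z1)).
  - split.
    + by case: Tnd => a [b [Ta [Tb ab]]]; exists a, b; split; [left|split; [left|]].
    + by apply: cptZ; apply: closedU.
    + apply: (@conn_union X T (T `|` Z1) Z2 cX (closedU hT cZ1) cT Tn) => //.
      move=> p [Tp|Z1p] nTp Z2p; first exact: nTp.
      exact: (nZ12 p).
  - move=> MT.
    have Z2T : Z2 `<=` T.
      move=> p Z2p; have : (T `|` Z1) p by rewrite MT.
      by case=> // Z1p; case: (nZ12 p Z1p Z2p).
    have ZZ1 : Z `<=` Z1.
      rewrite /Z (closure_id Z1).1 //; apply: closureS => p nTp.
      have : Z p by apply: ZT.
      rewrite ZZ => -[//|Z2p]; by case: nTp; apply: Z2T.
    have Zz : Z z by rewrite ZZ; right.
    exact: (nZ12 z (ZZ1 z Zz) Z2z).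
  - have nZ2x : ~ Z2 x by move=> Z2x; exact: (nZ12 x Z1x Z2x).
    apply: (@filterS _ _ _ (~` T `&` ~` Z2)).
      move=> p [nTp nZ2p]; right.
      have : Z p by apply: ZT.
      by rewrite ZZ => -[//|].
    apply: open_nbhs_nbhs; split => //.
    by apply: openI => //; exact: closed_openC.
case/connectedPn: cZc => E [En ZE sep].
have c0 : closed (E false) by exact: (sep_closed _ _ _ _ cZ ZE sep).
have c1 : closed (E true).
  have sep' : separated (E true) (E false) by rewrite separatedC.
  by apply: (sep_closed _ _ _ _ cZ _ sep'); rewrite setUC.
have dj := separated_disjoint sep.
move: Zx; rewrite ZE => -[x0|x1].
  exact: (Zsplit (E false) (E true)).
apply: (Zsplit (E true) (E false)) => //; first by rewrite setUC.
by rewrite setIC.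
Qed.
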